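(* Let $G$ be a strongly connected digraph with $N>2$ nodes in which all nodes run the Privacy-Preserving Push-Sum Algorithm described in the context. Let $\mathcal A\subset\mathcal V$ be a set of honest-but-curious nodes, $\mathcal L=\mathcal V\setminus\mathcal A$, and $i\in\mathcal L$. If $N_i^{out}\cup N_i^{in}\not\subseteq\mathcal A$, then the privacy of node $i$ is preserved against $\mathcal A$, i.e., for every $\kappa\in\mathbb N$ and every feasible information sequence $\mathcal I_{\mathcal A}(0:\kappa)$, $\mathrm{Diam}(\mathcal I_{\mathcal A}(0:\kappa))=\infty$.
   Context: Digraph conventions: $\mathcal V=\{1,\dots,N\}$, no self-loops; $(j,i)\in\mathcal E$ means node $i$ can send messages to node $j$. $N_i^{in}=\{j:(i,j)\in\mathcal E\}$, $N_i^{out}=\{j:(j,i)\in\mathcal E\}$. Strongly connected: a directed path exists from any node to any other node. Privacy-Preserving Push-Sum Algorithm (each node $i$ has a private real initial state $x_i(0)$; $M>0$ is a fixed constant). Initialization: node $i$ draws $x^\alpha_{i,1}(0)\sim U(-M,M)$ and sets $x^\beta_{i,1}(0)=2x_i(0)-x^\alpha_{i,1}(0)$, $x^\alpha_{i,2}(0)=0$, $x^\beta_{i,2}(0)=2$. Weights: at $k=0$, node $i$ draws the numbers $\{p_{ji}(0):j\in N_i^{out}\cup\{i\}\}$ and $\alpha_i(0)$ independently from $\mathcal N(0,M)$ and normalizes them so that $\sum_{j=1}^N p_{ji}(0)+\alpha_i(0)=1$; at each $k\ge1$, node $i$ draws $\{p_{ji}(k):j\in N_i^{out}\cup\{i\}\}$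 and $\alpha_i(k)$ independently from $U(0,1)$ and normalizes them so that $\sum_{j=1}^N p_{ji}(k)+\alpha_i(k)=1$; in all cases $p_{ji}(k)=0$ if $j\notin N_i^{out}\cup\{i\}$. State update, for $k\ge0$, $l=1,2$: node $i$ sends $p_{ji}(k)x^\alpha_{i,l}(k)$ to each $j\in N_i^{out}$ and updates $$x^\alpha_{i,l}(k+1)=\sum_{j\in N_i^{in}\cup\{i\}}p_{ij}(k)x^\alpha_{j,l}(k)+x^\beta_{i,l}(k),\qquad x^\beta_{i,l}(k+1)=\alpha_i(k)x^\alpha_{i,l}(k).$$ Node $i$'s estimated average is $\hat x^{ave}_i(k+1)=x^\alpha_{i,1}(k+1)/x^\alpha_{i,2}(k+1)$. The substate $x^\beta_{i,l}$ is never transmitted. Honest-but-curious nodes: nodes that follow the protocol, try to infer other nodes' private initial values from the data they receive, and may pool their data. For a set $\mathcal A$ of such nodes, the information available at time $k$ is $\mathcal I_{\mathcal A}(k)=\{\mathcal I_a(k):a\in\mathcal A\}$ with $$\mathcal I_a(k)=\{x^\alpha_{a,l}(k),x^\beta_{a,l}(k),p_{ja}(k),p_{ap}(k)x^\alpha_{p,l}(k): p\in N_a^{in},\ j\in\mathcal V,\ l=1,2\},$$ and $\mathcal I_{\mathcal A}(0:\kappa)=\bigcup_{0\le k\le\kappa}\mathcal I_{\mathcal A}(k)$. For a feasible $\mathcal I_{\mathcal A}(0:\kappa)$, $\Delta(\mathcal I_{\mathcal A}(0:\kappa),i)$ is the set of all values $x_i(0)=(x^\alpha_{i,1}(0)+x^\beta_{i,1}(0))/2$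 for which there exist initial substates $x^\alpha_{n,1}(0),x^\beta_{n,1}(0)$, $n\in\mathcal L$, and weights $p_{jn}(k),\alpha_n(k)$, $n\in\mathcal L$, $j\in\mathcal V$, $k=0,\dots,\kappa$ (satisfying the column normalization $\sum_j p_{jn}(k)+\alpha_n(k)=1$ and the sparsity pattern of the algorithm; at $k=0$ the weights may be arbitrary real numbers, as their generating distribution is Gaussian), such that the quantities of $\mathcal I_{\mathcal A}(0:\kappa)$ generated by the update rules (with $x^\alpha_{n,2}(0)=0$, $x^\beta_{n,2}(0)=2$) coincide with the given ones. $\mathrm{Diam}(\mathcal I_{\mathcal A}(0:\kappa))=\sup\{|x-x'|:x,x'\in\Delta(\mathcal I_{\mathcal A}(0:\kappa),i)\}$. The privacy of node $i\in\mathcal L$ is preserved against $\mathcal A$ if for every $\kappa\in\mathbb N$, $\mathrm{Diam}(\mathcal I_{\mathcal A}(0:\kappa))=\infty$ for every feasible $\mathcal I_{\mathcal A}(0:\kappa)$. *)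

(* Defs.v *)
From Stdlib Require Import Reals List Arith Relations.
From Coquelicot Require Import Coquelicot.
Open Scope R_scope.

(* Nodes are the naturals 0 .. N-1 (paper: 1 .. N).
   A digraph is a boolean relation E with  E j i = true  iff  (j,i) ∈ ℰ,
   i.e. node i can send messages to node j. *)

Definition sumV (N : nat) (f : nat -> R) : R :=
  fold_right (fun j acc => f j + acc) 0 (seq 0 N).

Definition digraph_on (N : nat) (E : nat -> nat -> bool) : Prop :=
  (forall j i, E j i = true -> (j < N)%nat /\ (i < N)%nat) /\
  (forall i, E i i = false).

Definition sends (E : nat -> nat -> bool) (i j : nat) : Prop := E j i = true.

Definition strongly_connected (N : nat) (E : nat -> nat -> bool) : Prop :=
  forall i j, (i < N)%nat -> (j < N)%nat -> i <> j -> clos_trans nat (sends E) i j.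

(* j ∈ N_i^in ∪ {i}   (N_i^in = {j : (i,j) ∈ ℰ}) *)
Definition in_nbr_or_self (E : nat -> nat -> bool) (i j : nat) : bool :=
  E i j || Nat.eqb j i.
(* j ∈ N_i^out ∪ {i}  (N_i^out = {j : (j,i) ∈ ℰ}) *)
Definition out_nbr_or_self (E : nat -> nat -> bool) (i j : nat) : bool :=
  E j i || Nat.eqb j i.

(* All random quantities of one execution:
   xa0 n = x^α_{n,1}(0), xb0 n = x^β_{n,1}(0),
   pw k j n = p_{jn}(k),  al k n = α_n(k). *)
Record params := mkParams {
  xa0 : nat -> R;
  xb0 : nat -> R;
  pw  : nat -> nat -> nat -> R;
  al  : nat -> nat -> R }.

Definition x0 (P : params) (n : nat) : R := (xa0 P n + xb0 P n) / 2.

(* the substates (x^α_{.,l}(k), x^β_{.,l}(k)), l = 1 or 2 *)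
Fixpoint state (N : nat) (E : nat -> nat -> bool) (P : params) (l : nat) (k : nat)
  : (nat -> R) * (nat -> R) :=
  match k with
  | O => if Nat.eqb l 1 then (xa0 P, xb0 P) else (fun _ => 0, fun _ => 2)
  | S k' =>
      let (a, b) := state N E P l k' in
      (fun i => sumV N (fun j => if in_nbr_or_self E i j then pw P k' i j * a j else 0)
                + b i,
       fun i => al P k' i * a i)
  end.

Definition xa (N : nat) E P l k n : R := fst (state N E P l k) n.
Definition xb (N : nat) E P l k n : R := snd (state N E P l k) n.

(* Admissible weights of node n at time k: sparsity pattern and column
   normalisation; for k >= 1 the weights are (normalised) U(0,1) draws,
   hence strictly positive on the pattern; at k = 0 they are arbitrary reals
   (normalised Gaussians). *)
Definition valid_weights (N : nat) E (P : params) (k n : nat) : Prop :=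
  (forall j, out_nbr_or_self E n j = false -> pw P k j n = 0) /\
  sumV N (fun j => pw P k j n) + al P k n = 1 /\
  ((1 <= k)%nat ->
     (forall j, out_nbr_or_self E n j = true -> 0 < pw P k j n) /\ 0 < al P k n).

Definition valid_run (N : nat) E (M : R) (P : params) : Prop :=
  (forall n, (n < N)%nat -> - M < xa0 P n < M) /\
  (forall k n, (n < N)%nat -> valid_weights N E P k n).

(* The data I_A(k) generated by Q coincides with that generated by P. *)
Definition info_match (N : nat) E (A : nat -> Prop) (P Q : params) (k : nat) : Prop :=
  forall a, (a < N)%nat -> A a ->
    (forall l, (l = 1 \/ l = 2)%nat ->
       xa N E Q l k a = xa N E P l k a /\
       xb N E Q l k a = xb N E P l k a /\
       (forall p, E a p = true ->
          pw Q k a p * xa N E Q l k p = pw P k a p * xa N E P l k p)) /\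
    (forall j, (j < N)%nat -> pw Q k j a = pw P k j a).

(* Δ(I_A(0:κ), i) for the information generated by the run P:
   the set of values x_i(0) compatible with I_A(0:κ), where only the initial
   substates and the weights of nodes in L = V \ A are unknown. *)
Definition DeltaSet (N : nat) E (A : nat -> Prop) (P : params) (kappa i : nat) (x : R) : Prop :=
  exists Q : params,
    (forall n, (n < N)%nat -> A n -> xa0 Q n = xa0 P n /\ xb0 Q n = xb0 P n) /\
    (forall k n, (k <= kappa)%nat -> (n < N)%nat -> A n ->
        al Q k n = al P k n /\ (forall j, pw Q k j n = pw P k j n)) /\
    (forall k n, (k <= kappa)%nat -> (n < N)%nat -> ~ A n -> valid_weights N E Q k n) /\
    (forall k, (k <= kappa)%nat -> info_match N E A P Q k) /\
    x = x0 Q i.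

Definition DiamA (S : R -> Prop) : Rbar :=
  Lub_Rbar (fun d => exists x x', S x /\ S x' /\ d = Rabs (x - x')).

(* Main.v *)
Require Import Defs.
From Stdlib Require Import Reals List Arith Relations Lra Lia.
From Coquelicot Require Import Coquelicot.
Open Scope R_scope.

Definition sumL (l : list nat) (f : nat -> R) : R :=
  fold_right (fun j acc => f j + acc) 0 l.

Lemma sumL_ext l f g : (forall j, f j = g j) -> sumL l f = sumL l g.
Proof. intros H; induction l; simpl; [reflexivity| rewrite H, IHl; reflexivity]. Qed.

Lemma sumL_plus l f g : sumL l (fun j => f j + g j) = sumL l f + sumL l g.
Proof. induction l; simpl; [lra| rewrite IHl; lra]. Qed.

Lemma sumL_scal l f c : sumL l (fun j => f j * c) = sumL l f * c.
Proof. induction l; simpl; [lra| rewrite IHl; lra]. Qed.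

Lemma sumL_ind0 l v c : ~ In v l -> sumL l (fun j => if Nat.eqb j v then c else 0) = 0.
Proof.
  induction l; simpl; intros H; [reflexivity|].
  destruct (Nat.eqb_spec a v); [exfalso; tauto|]. rewrite IHl by tauto. lra.
Qed.

Lemma sumL_ind l v c : NoDup l -> In v l -> sumL l (fun j => if Nat.eqb j v then c else 0) = c.
Proof.
  induction l; simpl; intros Hn H; [contradiction|].
  inversion Hn; subst.
  destruct (Nat.eqb_spec a v).
  - subst. rewrite sumL_ind0 by assumption. lra.
  - rewrite IHl; [lra|assumption|destruct H; [congruence|assumption]].
Qed.

Lemma sumV_ind N v c : (v < N)%nat -> sumV N (fun j => if Nat.eqb j v then c else 0) = c.
Proof.
  intros. apply (sumL_ind (seq 0 N)). apply seq_NoDup. apply in_seq. lia.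
Qed.

Lemma sumV_ext N f g : (forall j, f j = g j) -> sumV N f = sumV N g.
Proof. apply sumL_ext. Qed.
Lemma sumV_plus N f g : sumV N (fun j => f j + g j) = sumV N f + sumV N g.
Proof. apply sumL_plus. Qed.
Lemma sumV_scal N f c : sumV N (fun j => f j * c) = sumV N f * c.
Proof. apply sumL_scal. Qed.

Lemma diam_inf (S : R -> Prop) c : (forall s, S (c + s)) -> DiamA S = p_infty.
Proof.
  intros HS. unfold DiamA. apply is_lub_Rbar_unique. split.
  - intros x _. simpl. exact I.
  - intros b Hb. destruct b as [b| |]; simpl; auto.
    + assert (H := Hb (Rabs (c + (Rabs b + 1) - (c + 0)))).
      simpl in H. exfalso.
      assert (Rabs (c + (Rabs b + 1) - (c + 0)) <= b).
      { apply H. exists (c + (Rabs b + 1)), (c + 0). auto. }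
      replace (c + (Rabs b + 1) - (c + 0)) with (Rabs b + 1) in H0 by ring.
      rewrite Rabs_pos_eq in H0 by (pose proof (Rabs_pos b); lra).
      pose proof (Rle_abs b). lra.
    + apply (Hb (Rabs ((c+0) - (c+0)))). exists (c+0), (c+0). auto.
Qed.

Lemma xa_S N E P l k n : xa N E P l (S k) n =
  sumV N (fun j => if in_nbr_or_self E n j then pw P k n j * xa N E P l k j else 0)
  + xb N E P l k n.
Proof. unfold xa, xb; simpl; destruct (state N E P l k); reflexivity. Qed.

Lemma xb_S N E P l k n : xb N E P l (S k) n = al P k n * xa N E P l k n.
Proof. unfold xa, xb; simpl; destruct (state N E P l k); reflexivity. Qed.

Lemma xa_0 N E P l n : xa N E P l 0 n = if Nat.eqb l 1 then xa0 P n else 0.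
Proof. unfold xa; simpl; destruct (Nat.eqb l 1); reflexivity. Qed.
Lemma xb_0 N E P l n : xb N E P l 0 n = if Nat.eqb l 1 then xb0 P n else 2.
Proof. unfold xb; simpl; destruct (Nat.eqb l 1); reflexivity. Qed.

Lemma valid_weights_ext N E P Q k n :
  (forall j, pw Q k j n = pw P k j n) -> al Q k n = al P k n ->
  valid_weights N E P k n -> valid_weights N E Q k n.
Proof.
  intros H1 H2 [V1 [V2 V3]]. split; [|split].
  - intros j Hj. rewrite H1; auto.
  - rewrite H2. rewrite (sumV_ext N _ (fun j => pw P k j n)) by auto. exact V2.
  - intros Hk. destruct (V3 Hk). split; [intros j Hj; rewrite H1; auto| rewrite H2; auto].
Qed.

Definition x0u (P : params) (u : nat) := xa0 P u.
Definition ww P u := if Req_EM_T (x0u P u) 0 then 1 else x0u P u.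
Definition rr P u := x0u P u / ww P u.
Definition ee P u (d : R) := 1 - rr P u - d / ww P u.
Definition newcol P u v d j := pw P 0 j u * rr P u + (if Nat.eqb j v then d / ww P u else 0)
   + (if Nat.eqb j u then ee P u d else 0).
Definition QQ P u v d := mkParams
 (fun n => if Nat.eqb n u then ww P u else xa0 P n)
 (fun n => if Nat.eqb n u then xb0 P u - ee P u d * ww P u else if Nat.eqb n v then xb0 P v - d else xb0 P n)
 (fun k j n => if andb (Nat.eqb k 0) (Nat.eqb n u) then newcol P u v d j else pw P k j n)
 (fun k n => if andb (Nat.eqb k 0) (Nat.eqb n u) then al P 0 u * rr P u else al P k n).

Lemma ww_nz P u : ww P u <> 0.
Proof. unfold ww. destruct (Req_EM_T (x0u P u) 0); lra. Qed.
Lemma rr_ww P u : rr P u * ww P u = x0u P u.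
Proof. unfold rr. field. apply ww_nz. Qed.

Lemma state1 N E P u v d l n :
  (u < N)%nat -> u <> v -> E v u = true ->
  xa N E (QQ P u v d) l 1 n = xa N E P l 1 n /\ xb N E (QQ P u v d) l 1 n = xb N E P l 1 n.
Proof.
  intros Hu Huv Hvu. rewrite !xa_S, !xb_S, !xa_0. split.
  2:{ destruct (Nat.eqb l 1); simpl; [|ring].
      destruct (Nat.eqb_spec n u); simpl.
      - subst. rewrite Rmult_assoc, rr_ww. reflexivity.
      - reflexivity. }
  rewrite !xb_0. destruct (Nat.eqb l 1) eqn:Hl.
  2:{ f_equal. apply sumV_ext. intros j. rewrite !xa_0, Hl. destruct (in_nbr_or_self E n j); ring. }
  rewrite (sumV_ext N _ (fun m => (if in_nbr_or_self E n m then pw P 0 n m * xa0 P m else 0)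
     + (if Nat.eqb m u then (if Nat.eqb n v then d else 0) + (if Nat.eqb n u then ee P u d * ww P u else 0) else 0))).
  2:{ intros m. rewrite !xa_0, Hl. simpl. destruct (Nat.eqb_spec m u).
      - subst m. unfold in_nbr_or_self.
        destruct (E n u) eqn:Enu; simpl.
        + unfold newcol. pose proof (rr_ww P u). pose proof (ww_nz P u).
          unfold x0u in *; rewrite <- H.
          destruct (Nat.eqb n v), (Nat.eqb n u); field; auto.
        + destruct (Nat.eqb_spec u n); simpl.
          * subst. rewrite ?Nat.eqb_refl. unfold newcol. rewrite ?Nat.eqb_refl.
            destruct (Nat.eqb_spec n v); [congruence|].
            pose proof (rr_ww P n). pose proof (ww_nz P n). unfold x0u in *. rewrite <- H. field; auto.
          * destruct (Nat.eqb_spec n v); [subst; congruence|].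
            destruct (Nat.eqb_spec n u); [congruence|]. ring.
      - ring. }
  rewrite (sumV_ext N (fun j => if in_nbr_or_self E n j then pw P 0 n j * xa N E P l 0 j else 0)
    (fun j => if in_nbr_or_self E n j then pw P 0 n j * xa0 P j else 0))
    by (intros j; rewrite xa_0, Hl; reflexivity).
  rewrite sumV_plus, sumV_ind by assumption. simpl.
  destruct (Nat.eqb_spec n u); [subst; rewrite (proj2 (Nat.eqb_neq _ _) Huv); ring|].
  destruct (Nat.eqb_spec n v); [subst|]; ring.
Qed.

Lemma stateK N E P u v d l k n :
  (u < N)%nat -> u <> v -> E v u = true ->
  xa N E (QQ P u v d) l (S k) n = xa N E P l (S k) n /\
  xb N E (QQ P u v d) l (S k) n = xb N E P l (S k) n.
Proof.
  intros Hu Huv Hvu. revert n. induction k; intros n.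
  - apply state1; auto.
  - rewrite (xa_S N E (QQ P u v d) l (S k) n), (xb_S N E (QQ P u v d) l (S k) n),
      (xa_S N E P l (S k) n), (xb_S N E P l (S k) n).
    simpl. rewrite (proj1 (IHk n)), (proj2 (IHk n)). split; [|reflexivity].
    f_equal. apply sumV_ext. intros j. rewrite (proj1 (IHk j)). reflexivity.
Qed.

Lemma vw_u N E M P u v d :
  valid_run N E M P -> (u < N)%nat -> (v < N)%nat -> u <> v -> E v u = true ->
  valid_weights N E (QQ P u v d) 0 u.
Proof.
  intros [_ HV] Hu Hv Huv Hvu. destruct (HV 0%nat u Hu) as [V1 [V2 V3]].
  split; [|split].
  - intros j Hj. simpl. rewrite Nat.eqb_refl. simpl. unfold newcol.
    unfold out_nbr_or_self in Hj. apply Bool.orb_false_iff in Hj as [Hj1 Hj2].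
    rewrite V1 by (unfold out_nbr_or_self; rewrite Hj1, Hj2; reflexivity).
    rewrite Hj2. destruct (Nat.eqb_spec j v); [subst; congruence|]. ring.
  - simpl. rewrite Nat.eqb_refl. simpl.
    unfold newcol.
    rewrite sumV_plus, sumV_plus, sumV_scal, sumV_ind, sumV_ind by assumption.
    unfold ee. replace (sumV N (fun j => pw P 0 j u)) with (1 - al P 0 u) by lra. ring.
  - intros H; lia.
Qed.

Lemma x0_u P u v d : x0 (QQ P u v d) u = x0 P u + d / 2.
Proof.
  unfold x0. simpl. rewrite Nat.eqb_refl. unfold ee.
  pose proof (rr_ww P u). pose proof (ww_nz P u). unfold x0u in *.
  replace ((1 - rr P u - d / ww P u) * ww P u) with (ww P u - xa0 P u - d) by (rewrite <- H; field; auto).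
  field.
Qed.

Lemma x0_v P u v d : u <> v -> x0 (QQ P u v d) v = x0 P v - d / 2.
Proof.
  intros H. unfold x0. simpl. rewrite (proj2 (Nat.eqb_neq v u)) by auto. rewrite Nat.eqb_refl. field.
Qed.

Lemma compat N E M A P kappa u v d :
  valid_run N E M P -> (u < N)%nat -> (v < N)%nat -> ~ A u -> ~ A v -> E v u = true -> u <> v ->
  let Q := QQ P u v d in
    (forall n, (n < N)%nat -> A n -> xa0 Q n = xa0 P n /\ xb0 Q n = xb0 P n) /\
    (forall k n, (k <= kappa)%nat -> (n < N)%nat -> A n ->
        al Q k n = al P k n /\ (forall j, pw Q k j n = pw P k j n)) /\
    (forall k n, (k <= kappa)%nat -> (n < N)%nat -> ~ A n -> valid_weights N E Q k n) /\
    (forall k, (k <= kappa)%nat -> info_match N E A P Q k).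
Proof.
  intros HV Hu Hv HAu HAv Hvu Huv Q. subst Q.
  assert (neq : forall n, A n -> n <> u /\ n <> v) by (intros n Hn; split; intros ->; auto).
  split; [|split; [|split]].
  - intros n _ Hn. destruct (neq n Hn) as [H1 H2]. simpl.
    rewrite (proj2 (Nat.eqb_neq n u) H1), (proj2 (Nat.eqb_neq n v) H2). auto.
  - intros k n _ _ Hn. destruct (neq n Hn) as [H1 H2]. simpl.
    rewrite (proj2 (Nat.eqb_neq n u) H1), Bool.andb_false_r. auto.
  - intros k n _ Hn HAn.
    destruct (Nat.eqb_spec k 0); [destruct (Nat.eqb_spec n u)|].
    + subst. apply (vw_u N E M); auto.
    + apply (valid_weights_ext N E P); simpl;
        [intros j| |apply (proj2 HV); auto]; subst; rewrite (proj2 (Nat.eqb_neq n u)); auto.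
    + apply (valid_weights_ext N E P); simpl;
        [intros j| |apply (proj2 HV); auto]; rewrite (proj2 (Nat.eqb_neq k 0)); auto.
  - intros k _ a Ha HAa. destruct (neq a HAa) as [H1 H2].
    destruct k as [|k].
    + split.
      * intros l _. rewrite !xa_0, !xb_0. simpl.
        rewrite (proj2 (Nat.eqb_neq a u) H1), (proj2 (Nat.eqb_neq a v) H2).
        split; [reflexivity|split; [reflexivity|]].
        intros p Hp. rewrite !xa_0. simpl.
        destruct (Nat.eqb_spec p u).
        -- subst. unfold newcol. rewrite (proj2 (Nat.eqb_neq a u) H1), (proj2 (Nat.eqb_neq a v) H2).
           destruct (Nat.eqb l 1); [|ring].
           pose proof (rr_ww P u). unfold x0u in H. rewrite <- H. ring.
        -- reflexivity.
      * intros j _. simpl. rewrite (proj2 (Nat.eqb_neq a u) H1). reflexivity.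
    + split.
      * intros l _. rewrite (proj1 (stateK N E P u v d l k a Hu Huv Hvu)),
          (proj2 (stateK N E P u v d l k a Hu Huv Hvu)).
        split; [reflexivity|split; [reflexivity|]].
        intros p Hp. rewrite (proj1 (stateK N E P u v d l k p Hu Huv Hvu)). reflexivity.
      * intros j _. reflexivity.
Qed.

Theorem theorem2 (N : nat) (E : nat -> nat -> bool) (M : R)
  (A : nat -> Prop) (i : nat) :
  (2 < N)%nat ->
  digraph_on N E ->
  strongly_connected N E ->
  0 < M ->
  (forall a, A a -> (a < N)%nat) ->
  (i < N)%nat -> ~ A i ->
  (exists j, (j < N)%nat /\ (E j i = true \/ E i j = true) /\ ~ A j) ->
  forall P : params, valid_run N E M P ->
  forall kappa : nat, DiamA (DeltaSet N E A P kappa i) = p_infty.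
Proof.
  intros _ [HD1 HD2] _ _ _ Hi HAi [j [Hj [Hor HAj]]] P HV kappa.
  apply (diam_inf _ (x0 P i)). intros s.
  destruct Hor as [Eji | Eij].
  - assert (Hne : i <> j) by (intros ->; rewrite HD2 in Eji; discriminate).
    destruct (compat N E M A P kappa i j (2 * s) HV Hi Hj HAi HAj Eji Hne) as [C1 [C2 [C3 C4]]].
    exists (QQ P i j (2 * s)). split; [exact C1|split; [exact C2|split; [exact C3|split; [exact C4|]]]].
    rewrite x0_u. field.
  - assert (Hne : j <> i) by (intros ->; rewrite HD2 in Eij; discriminate).
    destruct (compat N E M A P kappa j i (- (2 * s)) HV Hj Hi HAj HAi Eij Hne) as [C1 [C2 [C3 C4]]].
    exists (QQ P j i (- (2 * s))). split; [exact C1|split; [exact C2|split; [exact C3|split; [exact C4|]]]].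
    rewrite x0_v by auto. field.
Qed.
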